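(* Consider a trajectory $\mathbf A(t)$, $t\ge0$, of the proto-cell ODE system described in the context. Let $\mathbf b$ be a moiety or a positive linear combination of moieties such that $\mathscr S_{me}\subseteq\mathrm{supp}(\mathbf b)$ and $\mathbf b$ is fed with some nutrient flux (i.e. $\mathbf b^T\mathbf f_{nu}>0$, equivalently $\mathscr S_{nu}\cap\mathrm{supp}(\mathbf b)\neq\varnothing$). Then $\mathbf b^T\mathbf A(t)$ has a strictly positive lower bound: if $\mathbf b^T\mathbf A(0)>0$, there is $c>0$ with $\mathbf b^T\mathbf A(t)\ge c$ for all $t\ge0$; if $\mathbf b^T\mathbf A(0)=0$, then for every $t_1>0$ there is $c>0$ with $\mathbf b^T\mathbf A(t)\ge c$ for all $t\ge t_1$.
   Context: A chemical reaction network (CRN) has species $\mathscr S=\{A_0,\dots,A_{N-1}\}$ and $R$ reactions, with $N\times R$ stoichiometry matrix $S$. It is conservative: there is $\mathbf m\in\mathbb R^N$ with all $m_i>0$ and $\mathbf m^TS=0$. Let $p=\dim\ker(S^T)\ge 1$. The set $\{\mathbf b\in\mathbb R^N_{\ge 0}:\mathbf b^TS=0\}$ is a pointed convex cone; a set of moieties is a family of $p$ linearly independent generating vectors of this cone forming a basis of $\ker(S^T)$. The support $\mathrm{supp}(\mathbf b)$ of a nonnegative vector $\mathbf b$ is the set of species $A_i$ with $b_i\neq 0$. Proto-cell ODE: the concentration vector $\mathbf A(t)\in\mathbb R^N_{\ge0}$ (component $[A_i]$) satisfies $$\frac{d\mathbf A}{dt}=S\mathbf f(\mathbf A)+\mathbf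 f_{nu}(\mathbf A)-\mathbf f_{me}(\mathbf A)-\lambda(\mathbf A)\mathbf A,$$ where: $\mathbf f(\mathbf A)\in\mathbb R^R_{\ge0}$ is the vector of reaction rates; one species $A_{me}$ is the membrane precursor and $\mathscr S_{me}\subseteq\mathscr S$ is a set of species containing $A_{me}$; $\mathbf f_{me}(\mathbf A)$ has a single nonzero component, along $A_{me}$, equal to a scalar $f_{me}(\mathbf A)$ which depends only on the concentrations of species in $\mathscr S_{me}$, is continuous and monotonically increasing in these concentrations, satisfies $f_{me}(\mathbf 0)=0$, and is $>0$ iff all species of $\mathscr S_{me}$ have positive concentration; $C_{me}>0$ is a constant and $\lambda(\mathbf A)=f_{me}(\mathbf A)/C_{me}$ is the growth rate; $\mathscr S_{nu}\subseteq\mathscr S$ is the set of nutrients and $\mathbf f_{nu}$ has nonzero components only along species of $\mathscr S_{nu}$, being either (i) a constant vector with $f_{nu,i}>0$ for $A_i\in\mathscr S_{nu}$, or (ii) given by $f_{nu,i}=\mathcal D_i([A_{i,out}]-[A_i])/(1+[A_{i,out}]/K_{i,out})$ for $A_i\in\mathscr S_{nu}$, with positive constants $\mathcal D_i$, $[A_{i,out}]$, $K_{i,out}$. *)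

(* Defs.v *)
From HB Require Import structures.
From mathcomp Require Import all_boot all_order all_algebra.
From mathcomp Require Import all_classical all_reals all_analysis.
Set Implicit Arguments. Unset Strict Implicit. Unset Printing Implicit Defensive.
Import Order.TTheory GRing.Theory Num.Theory.
Import numFieldNormedType.Exports.
Local Open Scope classical_set_scope.
Local Open Scope ring_scope.

Definition nonneg_vec (R : realType) (N : nat) (x : 'cV[R]_N) : Prop :=
  forall i, 0 <= x i 0.

Definition conservative (R : realType) (N nR : nat) (S : 'M[R]_(N, nR)) : Prop :=
  exists m : 'rV[R]_N, (forall i, 0 < m 0 i) /\ m *m S = 0.

(* Mo (rows = moieties, written as row vectors b^T) is a set of moieties:
   p linearly independent nonnegative vectors in ker(S^T) forming a basis of
   ker(S^T) (kermx S is the left kernel {u | u S = 0}) and generating the cone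
   {b >= 0 | b^T S = 0}. *)
Definition moiety_set (R : realType) (N nR p : nat) (S : 'M[R]_(N, nR))
    (Mo : 'M[R]_(p, N)) : Prop :=
  [/\ (forall k i, 0 <= Mo k i),
      Mo *m S = 0,
      row_free Mo,
      (Mo == kermx S)%MS &
      (forall b : 'rV[R]_N, (forall i, 0 <= b 0 i) -> b *m S = 0 ->
         exists c : 'rV[R]_p, (forall k, 0 <= c 0 k) /\ b = c *m Mo)].

Definition moiety_or_pos_comb (R : realType) (N p : nat) (Mo : 'M[R]_(p, N))
    (b : 'rV[R]_N) : Prop :=
  exists c : 'rV[R]_p,
    [/\ (forall k, 0 <= c 0 k), (exists k, 0 < c 0 k) & b = c *m Mo].

Definition supp (R : realType) (N : nat) (b : 'rV[R]_N) : {set 'I_N} :=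
  [set i | b 0 i != 0].

Definition membrane_flux (R : realType) (N : nat) (Sme : {set 'I_N}) (me : 'I_N)
    (fme : 'cV[R]_N -> R) : Prop :=
  [/\ me \in Sme,
      (forall x y : 'cV[R]_N, (forall i, i \in Sme -> x i 0 = y i 0) -> fme x = fme y),
      {within [set x : 'cV[R]_N | nonneg_vec x], continuous fme},
      (forall x y : 'cV[R]_N, nonneg_vec x -> nonneg_vec y ->
          (forall i, x i 0 <= y i 0) -> fme x <= fme y) &
      fme 0 = 0] /\
      (forall x : 'cV[R]_N, nonneg_vec x ->
          (0 < fme x <-> forall i, i \in Sme -> 0 < x i 0)).

Definition nutrient_flux (R : realType) (N : nat) (Snu : {set 'I_N})
    (fnu : 'cV[R]_N -> 'cV[R]_N) : Prop :=
  (exists F : 'cV[R]_N,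
      [/\ (forall i, i \in Snu -> 0 < F i 0),
          (forall i, i \notin Snu -> F i 0 = 0) &
          (forall x, fnu x = F)])
  \/
  (exists D Aout K : 'I_N -> R,
      (forall i, i \in Snu -> [/\ 0 < D i, 0 < Aout i & 0 < K i]) /\
      (forall x, fnu x = \col_i (if i \in Snu
                                 then D i * (Aout i - x i 0) / (1 + Aout i / K i)
                                 else 0))).

Definition protocell_rhs (R : realType) (N nR : nat) (S : 'M[R]_(N, nR))
    (f : 'cV[R]_N -> 'cV[R]_nR) (fnu : 'cV[R]_N -> 'cV[R]_N)
    (fme : 'cV[R]_N -> R) (me : 'I_N) (Cme : R) (x : 'cV[R]_N) : 'cV[R]_N :=
  S *m f x + fnu x - fme x *: delta_mx me 0 - (fme x / Cme) *: x.

Definition protocell_trajectory (R : realType) (N nR : nat) (S : 'M[R]_(N, nR))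
    (f : 'cV[R]_N -> 'cV[R]_nR) (fnu : 'cV[R]_N -> 'cV[R]_N)
    (fme : 'cV[R]_N -> R) (me : 'I_N) (Cme : R) (A : R -> 'cV[R]_N) : Prop :=
  [/\ {within [set t : R | 0 <= t], continuous A},
      (forall t : R, 0 <= t -> nonneg_vec (A t)) &
      (forall t : R, 0 < t -> is_derive t 1 A (protocell_rhs S f fnu fme me Cme (A t)))].

Definition bdot (R : realType) (N : nat) (b : 'rV[R]_N) (x : 'cV[R]_N) : R :=
  (b *m x) 0 0.

(* Main.v *)
Require Import Defs.
From HB Require Import structures.
From mathcomp Require Import all_boot all_order all_algebra.
From mathcomp Require Import all_classical all_reals all_analysis.
From mathcomp Require Import ring lra.
Import Order.TTheory GRing.Theory Num.Theory.
Import numFieldNormedType.Exports.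
Local Open Scope classical_set_scope.
Local Open Scope ring_scope.
Lemma deriv_left_le0 (R : realType) (y : R -> R) (a c : R) : a < c -> derivable y c 1 ->
  (forall t, a < t -> t < c -> y c <= y t) -> 'D_1 y c <= 0.
Proof.
move=> ac dy cmin.
rewrite ['D_1 y c]cvg_at_leftE; last exact: dy.
apply: limr_le.
  rewrite -(cvg_at_leftE (fun h => h^-1 *: ((y \o shift c) _ - y c))) //.
  apply: cvg_trans dy; apply: cvg_app.
  move=> A [e egt0 Ae]; exists e => // x xe xgt0; apply: Ae => //.
  exact/ltr0_neq0.
near=> h; apply: mulr_le0_ge0.
  by rewrite invr_le0; apply: ltW; near: h; exists 1 => /=.
rewrite subr_ge0 [_%:A]mulr1; apply: cmin; near: h.
- exists (c - a); first by rewrite /= subr_gt0.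
  move=> h; rewrite /= distrC subr0.
  move=> /ltr_normlP []; rewrite ltrBrDl ltrBlDl => ? _ _.
  idtac.
  done.
- exists 1 => //= h _ h0; rewrite /shift/=; lra.
Unshelve. all: by end_near. Qed.

Arguments deriv_left_le0 {R y a c}.

Lemma key_abs (R : realType) (y dy : R -> R) (d : R) :
  (forall u : R, 0 < u -> is_derive u (1:R) y (dy u)) ->
  {within [set t | 0 <= t], continuous y} ->
  (forall u, 0 <= u -> 0 <= y u) ->
  0 < d ->
  (forall u, 0 < u -> y u <= d -> 0 < dy u) ->
  (0 < y 0 -> exists c : R, 0 < c /\ forall t, 0 <= t -> c <= y t) /\
  (y 0 = 0 -> forall t1 : R, 0 < t1 -> exists c : R, 0 < c /\ forall t, t1 <= t -> c <= y t).
Proof.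
move=> hd hc hpos d0 hdy.
have mono : forall a c b, 0 <= a -> a <= b -> c <= d -> c <= y a -> c <= y b.
  move=> a c b a0 ab cd ca; rewrite leNgt; apply/negP => ybc.
  have cab : {within `[a, b], continuous y}.
    apply: continuous_subspaceW hc => t /=; rewrite in_itv /= => /andP[+ _].
    by apply: le_trans.
  have [u uab umin] := EVT_min ab cab.
  move: (uab); rewrite in_itv /= => /andP[au ub].
  have yuc : y u < c.
    apply: le_lt_trans ybc; apply: umin; by rewrite in_itv /= ab lexx.
  have au' : a < u.
    rewrite lt_neqAle au andbT; apply/eqP => eau; move: yuc; rewrite -eau.
    by rewrite ltNge ca.
  have u0 : 0 < u by apply: le_lt_trans au'.
  have := hdy u u0 (le_trans (ltW yuc) cd).
  have := hd u u0 => -[dyu <-].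
  have : 'D_1 y u <= 0.
    apply: (deriv_left_le0 au' dyu) => t aT tu; apply: umin.
    by rewrite in_itv /= (ltW aT) (le_trans (ltW tu) ub).
  by move=> h1 h2; move: (le_lt_trans h1 h2); rewrite ltxx.
have ypos : forall u, 0 < u -> 0 < y u.
  move=> u u0; rewrite lt_neqAle hpos ?(ltW u0) // andbT; apply/eqP => yu0.
  have := hdy u u0; rewrite -yu0 => /(_ (ltW d0)).
  have := hd u u0 => -[dyu <-].
  have : 'D_1 y u <= 0.
    apply: (deriv_left_le0 u0 dyu) => t t0 tu; rewrite -yu0; apply: hpos.
    exact: ltW.
  by move=> h1 h2; move: (le_lt_trans h1 h2); rewrite ltxx.
split.
  move=> y00; exists (Num.min (y 0) d); split; first by rewrite lt_min y00 d0.
  move=> t t0; apply: (mono 0) => //; by rewrite ge_min lexx ?orbT.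
move=> _ t1 t10; exists (Num.min (y t1) d); split; first by rewrite lt_min ypos.
move=> t t1t; apply: (mono t1) => //; first exact: ltW.
  by rewrite ge_min lexx ?orbT.
by rewrite ge_min lexx.
Qed.

Lemma bdotE (R : realType) (N : nat) (b : 'rV[R]_N) (x : 'cV[R]_N) :
  bdot b x = \sum_j b 0 j * x j 0.
Proof. by rewrite /bdot mxE. Qed.

Lemma bdot_cont (R : realType) (N : nat) (b : 'rV[R]_N) : continuous (bdot b).
Proof.
have -> : bdot b = \sum_(j < N) (fun x : 'cV[R]_N => b 0 j * x j 0).
  apply/funext => x; rewrite bdotE fct_sumE /=; exact: eq_bigr.
apply: (@big_ind _ (fun g : 'cV[R]_N -> R => continuous g)) => //.
- move=> x; exact: cst_continuous.
- move=> f g cf cg x; exact: (continuousD (cf x) (cg x)).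
- move=> j _ x; apply: continuousM; first exact: cst_continuous.
  exact: coord_continuous.
Qed.

Lemma bdot_derive (R : realType) (N : nat) (b : 'rV[R]_N) (A : R -> 'cV[R]_N) (t : R)
  (d : 'cV[R]_N) : is_derive t (1:R) A d -> is_derive t (1:R) (fun s => bdot b (A s)) (bdot b d).
Proof.
move=> [dA vA].
have ent : forall j, is_derive t (1:R) (fun s => A s j 0) (d j 0).
  move=> j; have dj : derivable (fun s => A s j 0) t 1 by move/derivable_mxP: dA; apply.
  apply: DeriveDef => //.
  by rewrite -vA derive_mx // mxE.
have -> : (fun s => bdot b (A s)) = \sum_(j < N) (fun s => b 0 j * A s j 0).
  apply/funext => x; rewrite bdotE fct_sumE /=; exact: eq_bigr.
rewrite bdotE; apply: is_derive_sum => j.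
Qed.

Lemma bdot_rhs (R : realType) (N nR : nat) (S : 'M[R]_(N, nR))
    (f : 'cV[R]_N -> 'cV[R]_nR) (fnu : 'cV[R]_N -> 'cV[R]_N)
    (fme : 'cV[R]_N -> R) (me : 'I_N) (Cme : R) (b : 'rV[R]_N) (x : 'cV[R]_N) :
  b *m S = 0 ->
  bdot b (protocell_rhs S f fnu fme me Cme x) =
  bdot b (fnu x) - fme x * b 0 me - fme x / Cme * bdot b x.
Proof.
move=> bS; rewrite /bdot /protocell_rhs !mulmxBr !mulmxDr -!scalemxAr mulmxA bS mul0mx.
by rewrite add0r -colE !mxE.
Qed.

Lemma term_le (R : realType) (N : nat) (b : 'rV[R]_N) (v : 'cV[R]_N) (i : 'I_N) :
  (forall j, 0 <= b 0 j * v j 0) -> b 0 i * v i 0 <= bdot b v.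
Proof.
move=> h; rewrite bdotE (bigD1 i) //= lerDl; apply: sumr_ge0 => j _; exact: h.
Qed.

Lemma nu_bound (R : realType) (N : nat) (Snu : {set 'I_N}) (fnu : 'cV[R]_N -> 'cV[R]_N)
   (b : 'rV[R]_N) (i0 : 'I_N) :
  nutrient_flux Snu fnu -> (forall i, 0 <= b 0 i) -> i0 \in Snu -> 0 < b 0 i0 ->
  exists P Q : R, [/\ 0 < P, 0 <= Q &
    forall x, nonneg_vec x -> P - Q * bdot b x <= bdot b (fnu x)].
Proof.
move=> [[F [Fpos F0 fF]]|[D [Aout [K [DAK fE]]]]] bnn i0nu bi0.
  have Fnn : forall j, 0 <= F j 0.
    move=> j; case: (boolP (j \in Snu)) => jn; first exact/ltW/Fpos.
    by rewrite F0.
  exists (b 0 i0 * F i0 0), 0; split => //.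
    by rewrite mulr_gt0 // Fpos.
  move=> x _; rewrite mul0r subr0 fF; apply: term_le => j.
  exact: mulr_ge0.
pose den i := 1 + Aout i / K i.
have denpos : forall i, i \in Snu -> 0 < den i.
  move=> i /DAK [D0 A0 K0]; rewrite /den; apply: ltr_wpDr => //.
  exact/ltW/divr_gt0.
pose p i := if i \in Snu then b 0 i * D i * Aout i / den i else 0.
pose q i := if i \in Snu then D i / den i else 0.
have pnn : forall i, 0 <= p i.
  move=> i; rewrite /p; case: ifP => // iS; have [D0 A0 K0] := DAK i iS.
  apply: divr_ge0; last exact/ltW/denpos.
  apply: mulr_ge0; [apply: mulr_ge0; [exact: bnn|exact: ltW]|exact: ltW].
have qnn : forall i, 0 <= q i.
  move=> i; rewrite /q; case: ifP => // iS; have [D0 A0 K0] := DAK i iS.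
  by apply: divr_ge0; [apply: ltW|apply/ltW/denpos].
exists (\sum_i p i), (\sum_i q i); split.
- rewrite (bigD1 i0) //=; apply: ltr_pwDl; last by apply: sumr_ge0.
  rewrite /p i0nu; have [D0 A0 K0] := DAK i0 i0nu.
  by apply: divr_gt0; [rewrite !mulr_gt0|apply: denpos].
- exact: sumr_ge0.
move=> x xnn; set Y := bdot b x.
have bxY : forall i, b 0 i * x i 0 <= Y.
  by move=> i; apply: term_le => j; apply: mulr_ge0.
rewrite mulr_suml -sumrB fE bdotE; apply: ler_sum => i _.
rewrite mxE /p /q; case: ifP => iS; last by rewrite !mulr0 mul0r subr0.
have dp := denpos i iS; have [D0 A0 K0] := DAK i iS.
have -> : b 0 i * (D i * (Aout i - x i 0) / den i) =
   b 0 i * D i * Aout i / den i - D i / den i * (b 0 i * x i 0).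
  rewrite /den; field; apply/andP; split; apply: lt0r_neq0 => //; exact: addr_gt0.
rewrite lerD2l lerN2; apply: ler_wpM2l => //.
by apply: divr_ge0; [apply: ltW|apply: ltW].
Qed.

Lemma me_bound (R : realType) (N : nat) (Sme : {set 'I_N}) (me : 'I_N)
    (fme : 'cV[R]_N -> R) (b : 'rV[R]_N) :
  membrane_flux Sme me fme -> (forall i, 0 <= b 0 i) -> (forall i, i \in Sme -> 0 < b 0 i) ->
  forall eps, 0 < eps -> exists d, 0 < d /\
    forall x, nonneg_vec x -> bdot b x <= d -> fme x <= eps.
Proof.
move=> [[meS dep cont mono f00] _] bnn bS eps epos.
pose A := [set x : 'cV[R]_N | nonneg_vec x].
have A0 : A 0 by move=> i; rewrite mxE.
have L : fme @ within A (nbhs (0 : 'cV[R]_N)) --> fme 0 := (subspace_continuousP A fme).1 cont 0 A0.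
move/cvgrPdist_lt: L => /(_ eps epos); rewrite near_withinE => /nbhs_ballP [r r0 hr].
pose w : 'cV[R]_N := \col_i (if i \in Sme then (b 0 i)^-1 else 0).
have wnn : forall i, 0 <= w i 0.
  move=> i; rewrite mxE; case: ifP => // iS; rewrite invr_ge0; exact: bnn.
pose d := r / (2 * (`|w| + 1)).
have nw0 : 0 <= `|w| by [].
have d0 : 0 < d by rewrite /d divr_gt0 // mulr_gt0 // ltr_wpDl.
exists d; split => // x xnn Yd.
pose x' : 'cV[R]_N := \col_i (if i \in Sme then x i 0 else 0).
have -> : fme x = fme x'.
  by apply: dep => i iS; rewrite mxE iS.
have x'nn : nonneg_vec x'.
  by move=> i; rewrite mxE; case: ifP.
have dwnn : nonneg_vec (d *: w).
  by move=> i; rewrite mxE; apply: mulr_ge0 => //; exact: ltW.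
apply: (@le_trans _ _ (fme (d *: w))).
  apply: mono => // i; rewrite !mxE; case: ifP => iS; last by rewrite mulr0.
  have bi := bS i iS.
  rewrite ler_pdivlMr // mulrC.
  apply: le_trans Yd; apply: term_le => j; exact: mulr_ge0.
have := hr (d *: w).
rewrite f00 /= sub0r normrN.
have dwball : ball (0 : 'cV[R]_N) r (d *: w).
  rewrite -ball_normE /ball_ /= sub0r normrN normrZ gtr0_norm //.
  rewrite /d mulrAC ltr_pdivrMr ?mulr_gt0 ?ltr_wpDl // ltr_pM2l //.
  lra.
move=> /(_ dwball dwnn) h; apply: le_trans (ltW h); exact: ler_norm.
Qed.

Arguments nu_bound {R N Snu fnu b i0}.
Arguments me_bound {R N Sme me fme b}.
Arguments bdot_derive {R N b A t d}.

Theorem mainTheorem5 (R : realType) (N nR p : nat) (S : 'M[R]_(N, nR))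
    (Mo : 'M[R]_(p, N))
    (f : 'cV[R]_N -> 'cV[R]_nR) (Snu Sme : {set 'I_N}) (me : 'I_N)
    (fnu : 'cV[R]_N -> 'cV[R]_N) (fme : 'cV[R]_N -> R) (Cme : R)
    (A : R -> 'cV[R]_N) (b : 'rV[R]_N) :
  conservative S ->
  moiety_set S Mo ->
  (forall x, nonneg_vec x -> forall j, 0 <= f x j 0) ->
  membrane_flux Sme me fme ->
  nutrient_flux Snu fnu ->
  0 < Cme ->
  protocell_trajectory S f fnu fme me Cme A ->
  moiety_or_pos_comb Mo b ->
  Sme \subset supp b ->
  (exists i, (i \in Snu) && (i \in supp b)) ->
  (0 < bdot b (A 0) ->
     exists c : R, 0 < c /\ forall t, 0 <= t -> c <= bdot b (A t)) /\
  (bdot b (A 0) = 0 ->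
     forall t1 : R, 0 < t1 ->
       exists c : R, 0 < c /\ forall t, t1 <= t -> c <= bdot b (A t)).
Proof.
move=> _ [Monn MoS _ _ _] _ hme hnu C0 [Acont Ann Ader] [c [cnn _ bdef]] Ssub [i0 /andP[i0nu i0b]].
have bnn : forall i, 0 <= b 0 i.
  move=> i; rewrite bdef mxE; apply: sumr_ge0 => k _; exact: mulr_ge0.
have bS : b *m S = 0 by rewrite bdef -mulmxA MoS mulmx0.
have bpos : forall i, i \in supp b -> 0 < b 0 i.
  by move=> i; rewrite inE lt_neqAle bnn andbT eq_sym.
have bSme : forall i, i \in Sme -> 0 < b 0 i.
  move=> i iS; apply: bpos; exact: (fintype.subsetP Ssub i iS).
have [P [Q [P0 Q0 nuB]]] := nu_bound hnu bnn i0nu (bpos _ i0b).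
have bme0 : 0 < b 0 me by apply: bSme; case: hme => -[].
set B := b 0 me.
pose eps := P / (4 * (B + Cme^-1)).
have Bc0 : 0 < B + Cme^-1 by apply: addr_gt0 => //; rewrite invr_gt0.
have eps0 : 0 < eps by rewrite /eps divr_gt0 // mulr_gt0.
have [d1 [d10 meB]] := me_bound hme bnn bSme _ eps0.
pose d := Num.min 1 (Num.min d1 (P / (4 * (Q + 1)))).
have Q10 : 0 < Q + 1 by apply: ltr_wpDl.
have d0 : 0 < d by rewrite /d !lt_min ltr01 d10 divr_gt0 // mulr_gt0.
have := @key_abs R (fun t => bdot b (A t))
   (fun t => bdot b (protocell_rhs S f fnu fme me Cme (A t))) d.
apply.
- move=> u u0; apply: bdot_derive; exact: Ader.
- apply: (within_continuous_comp _ A (bdot b)) => //.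
  move=> x _; exact: bdot_cont.
- move=> u u0; rewrite bdotE; apply: sumr_ge0 => j _; apply: mulr_ge0 => //.
  exact: Ann.
- exact: d0.
move=> u u0 Yd.
rewrite bdot_rhs //.
set X := A u; set Y := bdot b X.
have Xnn : nonneg_vec X by apply: Ann; exact: ltW.
have Y0 : 0 <= Y by rewrite /Y bdotE; apply: sumr_ge0 => j _; exact: mulr_ge0.
have Y1 : Y <= 1 by apply: le_trans Yd _; rewrite /d ge_min lexx.
have Yd1 : Y <= d1 by apply: le_trans Yd _; rewrite /d !ge_min lexx ?orbT.
have YdQ : Y <= P / (4 * (Q + 1)) by apply: le_trans Yd _; rewrite /d !ge_min lexx ?orbT.
have Fe := meB X Xnn Yd1.
have nub := nuB X Xnn.
set F := fme X.
have h1 : F * B + F / Cme * Y <= P / 4.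
  have -> : F * B + F / Cme * Y = F * (B + Y / Cme) by ring.
  apply: (@le_trans _ _ (eps * (B + Cme^-1))).
    apply: (@le_trans _ _ (eps * (B + Y / Cme))).
      apply: ler_wpM2r => //; apply: addr_ge0; first exact: ltW.
      by apply: divr_ge0 => //; exact: ltW.
    apply: ler_wpM2l; first exact: ltW.
    by rewrite lerD2l ler_pdivrMr // mulVf ?gt_eqF.
  rewrite /eps; rewrite le_eqVlt; apply/orP; left; apply/eqP; field.
  rewrite gt_eqF //=; apply: lt0r_neq0; apply: addr_gt0 => //; exact: mulr_gt0.
have h2 : Q * Y <= P / 4.
  apply: (@le_trans _ _ (Q * (P / (4 * (Q + 1))))); first exact: ler_wpM2l.
  rewrite mulrA ler_pdivrMr ?mulr_gt0 //.
  have -> : P / 4 * (4 * (Q + 1)) = P * Q + P by field.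
  have -> : Q * P = P * Q by ring.
  by rewrite lerDl ltW.
change (b 0 me) with B; change (bdot b X) with Y in nub; lra.
Qed.
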